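(* Let $(\mathbf C,I)$ be a finite-type based chain complex of real inner product spaces, let $M$ be an $(n,n-1)$-free Morse matching on it with Morse retraction $\Phi:\mathbf D\to\mathbf C$, $\Psi:\mathbf C\to\mathbf D$ where $\mathbf D=\mathbf C^M$, and let $M'$ be an $(n,n-1)$-free Morse matching on the based complex $\mathbf D$ with Morse retraction $\Phi':\mathbf E\to\mathbf D$, $\Psi':\mathbf D\to\mathbf E$ where $\mathbf E=\mathbf D^{M'}$. Then for all $s\in\mathbf C_n$, $$\mathcal L_s(\Psi'\Psi,\Phi\Phi')\le\mathcal L_s(\Psi,\Phi)+\mathcal L_{\Psi(s)}(\Psi',\Phi'),$$ i.e. $\lVert s-\Phi\Phi'\Psi'\Psi s\rVert_{\mathbf C_n}\le\lVert s-\Phi\Psi s\rVert_{\mathbf C_n}+\lVert\Psi s-\Phi'\Psi'\Psi s\rVert_{\mathbf D_n}$.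
   Context: Based chain complex: chain complex $(\mathbf C,\partial)$ of finite-dimensional real inner product spaces $\mathbf C_n$, $n\ge0$, with disjoint finite index sets $I_n$ and $\mathbf C_n=\bigoplus_{\alpha\in I_n}C_\alpha$; $\partial_{\beta,\alpha}=\pi_\beta\partial_n i_\alpha$. Graph: edges $\alpha\to\beta$ when $\partial_{\beta,\alpha}\ne0$. Morse matching: edge set $M$ with each cell on at most one edge, $\partial_{\beta,\alpha}$ an isomorphism for $\alpha\to\beta\in M$, and ''directed path from $\alpha$ to $\beta$ in the graph with $M$ reversed'' a partial order on each $I_n$; $M^0$ = unmatched cells; $(n,n-1)$-free means no edge of $M$ joins an $n$-cell to an $(n-1)$-cell. With $\Gamma_{\beta,\alpha}$ the sum over directed paths from $\alpha$ to $\beta$ in the reversed graph of composites of $\partial_{\sigma_{i+1},\sigma_i}$ (ordinary steps) and $-\partial_{\sigma_i,\sigma_{i+1}}^{-1}$ (reversed matched edges): Morse complex $\mathbf C^M_n=\bigoplus_{\alpha\in I_n\cap M^0}C_\alpha$ (based by $I\cap M^0$, restricted inner product) with boundary $\sum_{\beta\in M^0\cap I_{n-1}}\Gamma_{\beta,\alpha}$; Morse retraction $\Phi=\sum_{\beta\in I_n}\Gamma_{\beta,\alpha}$ on critical $C_\alpha$, $\Psi=\sum_{\beta\in M^0\cap I_n}\Gamma_{\beta,\alpha}$ on $C_\alpha$. For chain maps $\Phi,\Psi$ and a signal $s$, the topological loss is $\mathcal L_s(\Psi,\Phi)=\lVert s-\Phi\Psi s\rVert$. *)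

(* Defs.v *)
From HB Require Import structures.
From mathcomp Require Import all_boot all_order all_algebra.
From mathcomp Require Import reals.
Set Implicit Arguments. Unset Strict Implicit. Unset Printing Implicit Defensive.
Import Order.TTheory GRing.Theory Num.Theory.
Local Open Scope ring_scope.

(* Cells [a : cell] carry a degree
   [deg a] (so I_n = [pred a | deg a == n]) and a cell space
   C_a = 'rV[R]_(cdim a) with its standard inner product; C_n is the
   orthogonal direct sum of the C_a, deg a = n.  The block
   [bd a b : 'M_(cdim a, cdim b)] is ∂_{b,a} : C_a -> C_b acting on row
   vectors (u |-> u *m bd a b). *)
Record bcomplex (R : realType) := BCx {
  cell : finType;
  deg : cell -> nat;
  cdim : cell -> nat;
  bd : forall a b : cell, 'M[R]_(cdim a, cdim b) }.

Arguments cell {R}. Arguments deg {R}. Arguments cdim {R}. Arguments bd {R}.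

Definition chain {R : realType} (C : bcomplex R) := forall a : cell C, 'rV[R]_(cdim C a).

Section Defs.
Variable R : realType.
Variable C : bcomplex R.
Local Notation T := (cell C).


Definition is_based_complex : Prop :=
  (forall a b : T, bd C a b != 0 -> deg C a = (deg C b).+1) /\
  (forall a c : T, \sum_(b : T) (bd C a b *m bd C b c) = 0).

Definition edge (a b : T) : bool := bd C a b != 0.

Variable M : rel T. (* the matching, as a set of edges a -> b *)

Definition rstep : rel T := fun a b => (edge a b && ~~ M a b) || M b a.

Definition stepw (a b : T) : 'M[R]_(cdim C a, cdim C b) :=
  if M b a then - pinvmx (bd C b a) else bd C a b.

Fixpoint pathw (a : T) (p : seq T) : 'M[R]_(cdim C a, cdim C (last a p)) :=
  match p return 'M[R]_(cdim C a, cdim C (last a p)) with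
  | [::] => 1%:M
  | b :: q => stepw a b *m pathw b q
  end.

Definition po_on (P : pred T) (r : rel T) : Prop :=
  (forall a, P a -> r a a) /\
  (forall a b c, P a -> P b -> P c -> r a b -> r b c -> r a c) /\
  (forall a b, P a -> P b -> r a b -> r b a -> a = b).

Definition is_morse_matching : Prop :=
  (forall a b, M a b -> edge a b) /\
  (forall c : T, #|[set e : T * T | M e.1 e.2 && ((e.1 == c) || (e.2 == c))]| <= 1)%N /\
  (forall a b, M a b -> exists G : 'M[R]_(cdim C b, cdim C a),
      bd C a b *m G = 1%:M /\ G *m bd C a b = 1%:M) /\
  (forall n : nat, po_on [pred a | deg C a == n] (connect rstep)).

Definition nfree (n : nat) : Prop :=
  forall a b, M a b -> ~ (deg C a = n /\ (deg C b).+1 = n).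

Definition critical : pred T := fun a => [forall b, ~~ M a b && ~~ M b a].

(* Γ_{b,a} : C_a -> C_b, the sum over directed paths from a to b in the
   reversed graph.  Under the Morse-matching hypotheses the reversed graph
   is acyclic, so every path has fewer than #|T| steps. *)
Definition Gamma (b a : T) : 'M[R]_(cdim C a, cdim C b) :=
  \sum_(k < #|T|) \sum_(p : k.-tuple T | path rstep a p && (last a p == b))
     conform_mx 0 (pathw a p).

Definition mcell := {a : T | critical a}.

Definition morse_bd (a b : mcell) : 'M[R]_(cdim C (val a), cdim C (val b)) :=
  if deg C (val a) == (deg C (val b)).+1 then Gamma (val b) (val a) else 0.

Definition morse_cx : bcomplex R :=
  @BCx R mcell (fun a => deg C (val a)) (fun a => cdim C (val a)) morse_bd.

Definition morsePhi (x : chain morse_cx) : chain C :=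
  fun b => \sum_(a : mcell | deg C (val a) == deg C b) x a *m Gamma b (val a).

Definition morsePsi (x : chain C) : chain morse_cx :=
  fun b : mcell => \sum_(a : T | deg C a == deg C (val b)) x a *m Gamma (val b) a.

End Defs.


Definition cnorm (R : realType) (C : bcomplex R) (n : nat) (x : chain C) : R :=
  Num.sqrt (\sum_(a : cell C | deg C a == n) \sum_(i < cdim C a) (x a 0 i) ^+ 2).

Definition topo_loss (R : realType) (C D : bcomplex R) (n : nat) (s : chain C)
  (Psi : chain C -> chain D) (Phi : chain D -> chain C) : R :=
  cnorm n (fun a => s a - Phi (Psi s) a).

Arguments is_based_complex {R} C.
Arguments is_morse_matching {R} C M.
Arguments nfree {R} C M n.
Arguments morse_cx {R} C M.
Arguments morsePhi {R} C M x _.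
Arguments morsePsi {R} C M x _.
Arguments cnorm {R} C n x.
Arguments topo_loss {R} C D n s Psi Phi.

(* Main.v *)
Require Import Defs.
From HB Require Import structures.
From mathcomp Require Import all_boot all_order all_algebra.
From mathcomp Require Import reals ring lra.
Import Order.TTheory GRing.Theory Num.Theory.
Local Open Scope ring_scope.
Section CS.
Variable R : realType.
Variables (T : finType) (P : pred T) (d : T -> nat).
Definition SS (h : forall a, 'I_(d a) -> R) := \sum_(a | P a) \sum_(i < d a) h a i.

Lemma SS_lin u v w h1 h2 h3 :
  SS (fun a i => u * h1 a i + v * h2 a i + w * h3 a i) = u * SS h1 + v * SS h2 + w * SS h3.
Proof.
rewrite /SS !mulr_sumr -!big_split; apply: eq_bigr => a _.
by rewrite !mulr_sumr -!big_split.
Qed.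

Lemma SS_ge0 h : (forall a i, 0 <= h a i) -> 0 <= SS h.
Proof. by move=> H; apply: sumr_ge0 => a _; apply: sumr_ge0. Qed.

Lemma SS_ext h1 h2 : (forall a i, h1 a i = h2 a i) -> SS h1 = SS h2.
Proof. by move=> H; apply: eq_bigr => a _; apply: eq_bigr. Qed.

Lemma SS_CS f g :
  SS (fun a i => f a i * g a i) <= Num.sqrt (SS (fun a i => f a i ^+ 2)) * Num.sqrt (SS (fun a i => g a i ^+ 2)).
Proof.
set A := SS (fun a i => f a i ^+ 2); set B := SS (fun a i => g a i ^+ 2); set C := SS (fun a i => f a i * g a i).
have A0 : 0 <= A by apply: SS_ge0 => a i; apply: sqr_ge0.
have B0 : 0 <= B by apply: SS_ge0 => a i; apply: sqr_ge0.
have key t : 0 <= t ^+ 2 * A + (- 2 * t) * C + 1 * B.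
  rewrite /A /B /C -SS_lin.
  rewrite (@SS_ext _ (fun a i => (t * f a i - g a i) ^+ 2)); last by move=> a i; ring.
  by apply: SS_ge0 => a i; apply: sqr_ge0.
have CAB : C ^+ 2 <= A * B.
  have [Ae|Ap] := eqVneq A 0.
    have [C0|CN] := eqVneq C 0; first by rewrite C0 Ae expr0n /= mul0r.
    have := key ((B + 1) / (2 * C)).
    rewrite Ae mulr0 add0r mul1r.
    have -> : - 2 * ((B + 1) / (2 * C)) * C = - (B + 1).
      by field; rewrite CN /=.
    lra.
  have Apos : 0 < A by rewrite lt_def Ap A0.
  have := key (C / A).
  have -> : (C / A) ^+ 2 * A + - 2 * (C / A) * C + 1 * B = B - C ^+ 2 / A.
    by field; rewrite Ap.
  rewrite subr_ge0 ler_pdivrMr //; lra.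
apply: (le_trans (ler_norm C)).
by rewrite -sqrtrM // -sqrtr_sqr ler_wsqrtr.
Qed.

Lemma SS_mink f g :
  Num.sqrt (SS (fun a i => (f a i + g a i) ^+ 2)) <=
  Num.sqrt (SS (fun a i => f a i ^+ 2)) + Num.sqrt (SS (fun a i => g a i ^+ 2)).
Proof.
have H := SS_CS f g.
rewrite (@SS_ext _ (fun a i => 1 * (f a i ^+ 2) + 2 * (f a i * g a i) + 1 * (g a i ^+ 2))); last by move=> a i; ring.
rewrite SS_lin !mul1r.
set A := SS (fun a i => f a i ^+ 2); set B := SS (fun a i => g a i ^+ 2).
have A0 : 0 <= A by apply: SS_ge0 => a i; apply: sqr_ge0.
have B0 : 0 <= B by apply: SS_ge0 => a i; apply: sqr_ge0.
have sA := sqr_sqrtr A0; have sB := sqr_sqrtr B0.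
have gA := sqrtr_ge0 A; have gB := sqrtr_ge0 B.
rewrite -(@ger0_norm _ (Num.sqrt A + Num.sqrt B)); last by lra.
rewrite -sqrtr_sqr ler_wsqrtr //.
rewrite sqrrD sA sB; lra.
Qed.
End CS.

Section Main.
Variable R : realType.
Variable C : bcomplex R.
Variable M : rel (cell C).
Variable n : nat.
Hypothesis hdeg : forall a b : cell C, bd C a b != 0 -> deg C a = (deg C b).+1.
Hypothesis hfree : nfree C M n.
Hypothesis hM : forall a b, M a b -> edge a b.

Lemma rstep_deg c d : rstep M c d ->
  (deg C c = (deg C d).+1) \/ (M d c /\ deg C d = (deg C c).+1).
Proof.
rewrite /rstep => /orP[/andP[e _]|m]; first by left; apply: hdeg.
by right; split => //; apply: hdeg; apply: hM.
Qed.

Lemma step_lt c d : (deg C c < n)%N -> rstep M c d -> (deg C d < n)%N.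
Proof.
move=> cn /rstep_deg [e|[m e]]; first by rewrite e in cn; apply: ltn_trans (ltnSn _) cn.
rewrite e ltn_neqAle cn andbT; apply/eqP => h.
by apply: (hfree _ _ m); rewrite e; split.
Qed.

Lemma path_lt c p : (deg C c < n)%N -> path (rstep M) c p -> (deg C (last c p) < n)%N.
Proof.
elim: p c => [|d p IH] c //= cn /andP[s pp].
exact: IH _ (step_lt _ _ cn s) pp.
Qed.

Lemma crit_path a p : critical M a -> deg C a = n -> path (rstep M) a p ->
  p != [::] -> (deg C (last a p) < n)%N.
Proof.
move=> ca an; case: p => [|d p] //= /andP[s pp] _.
apply: (path_lt _ _ _ pp).
move/forallP: ca => /(_ d) /andP[_ nm].
move: s; rewrite /rstep (negbTE nm) orbF => /andP[e _].
by rewrite -an (hdeg _ _ e).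
Qed.

Lemma Gamma_off a b : critical M a -> deg C a = n -> deg C b = n -> a != b ->
  Gamma M b a = 0.
Proof.
move=> ca an bn ab; rewrite /Gamma; apply: big1 => k _; rewrite big1 // => p /andP[pp /eqP lb].
exfalso; case: (altP (tval p =P [::])) => [e|ne].
  by move: lb; rewrite e /= => lb; rewrite lb eqxx in ab.
by have := crit_path _ _ ca an pp ne; rewrite lb bn ltnn.
Qed.

Lemma Gamma_diag a : critical M a -> deg C a = n -> Gamma M a a = 1%:M.
Proof.
move=> ca an.
have h0 : (0 < #|cell C|)%N by apply/card_gt0P; exists a.
rewrite /Gamma (bigD1 (Ordinal h0)) //= [X in _ + X]big1 ?addr0; last first.
  move=> k nk; rewrite big1 // => p /andP[pp /eqP lb]; exfalso.
  have ne : tval p != [::].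
    apply/eqP => e; move: (size_tuple p); rewrite e /= => k0.
    by move: nk; rewrite -(inj_eq val_inj) /= -k0.
  by have := crit_path _ _ ca an pp ne; rewrite lb an ltnn.
rewrite (bigD1 [tuple]) //= big1 ?addr0; first by rewrite conform_mx_id.
by move=> p /andP[_ /eqP ne]; exfalso; apply: ne; apply: tuple0.
Qed.

Lemma Phi_crit (z : chain (morse_cx C M)) b (hb : critical M b) : deg C b = n ->
  morsePhi C M z b = z (exist _ b hb).
Proof.
move=> bn; rewrite /morsePhi (bigD1 (exist _ b hb)) /=; last by rewrite eqxx.
rewrite Gamma_diag // mulmx1 big1 ?addr0 // => a /andP[/eqP da ne].
rewrite Gamma_off ?mulmx0 // ?da //; first exact: (valP a).
all: try by apply: contra ne => /eqP e; apply/eqP; exact: val_inj.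
Qed.

Lemma Phi_noncrit (z : chain (morse_cx C M)) b : ~~ critical M b -> deg C b = n ->
  morsePhi C M z b = 0.
Proof.
move=> nb bn; rewrite /morsePhi big1 // => a /eqP da.
rewrite Gamma_off ?mulmx0 //; first exact: (valP a).
  by rewrite da.
by apply: contraNneq nb => <-; exact: (valP a).
Qed.

Lemma cnorm_ext (D : bcomplex R) (x y : chain D) :
  (forall a, deg D a == n -> x a = y a) -> cnorm D n x = cnorm D n y.
Proof. by move=> H; rewrite /cnorm; congr Num.sqrt; apply: eq_bigr => a /H ->. Qed.

Lemma Phi_iso (z : chain (morse_cx C M)) :
  cnorm C n (morsePhi C M z) = cnorm (morse_cx C M) n z.
Proof.
rewrite /cnorm; congr Num.sqrt.
rewrite (bigID (critical M)) /= [X in _ + X]big1 ?addr0; last first.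
  move=> b /andP[/eqP bn nb]; rewrite Phi_noncrit // big1 // => i _.
  by rewrite mxE expr0n.
rewrite (reindex_omap (val : mcell M -> cell C) insub); last first.
  by move=> i /andP[_ ci]; rewrite insubT.
apply: eq_big => [[b hb]|[b hb]] /=.
  by rewrite insubT /= hb eqxx !andbT.
move=> /andP[/andP[/eqP bn _] _]; apply: eq_bigr => i _.
by rewrite Phi_crit.
Qed.
Lemma Phi_lin (y1 y2 : chain (morse_cx C M)) b :
  morsePhi C M (fun a => y1 a - y2 a) b = morsePhi C M y1 b - morsePhi C M y2 b.
Proof. by rewrite /morsePhi -sumrB; apply: eq_bigr => a _; rewrite mulmxBl. Qed.
End Main.

Theorem mainTheorem16 (R : realType) (C : bcomplex R)
  (M : rel (cell C)) (M' : rel (cell (morse_cx C M))) (n : nat) (s : chain C) :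
  is_based_complex C ->
  is_morse_matching C M -> nfree C M n ->
  is_morse_matching (morse_cx C M) M' -> nfree (morse_cx C M) M' n ->
  (forall a : cell C, deg C a != n -> s a = 0) ->
  topo_loss C (morse_cx (morse_cx C M) M') n s
    (fun x => morsePsi (morse_cx C M) M' (morsePsi C M x))
    (fun y => morsePhi C M (morsePhi (morse_cx C M) M' y))
  <= topo_loss C (morse_cx C M) n s (morsePsi C M) (morsePhi C M)
     + topo_loss (morse_cx C M) (morse_cx (morse_cx C M) M') n (morsePsi C M s)
         (morsePsi (morse_cx C M) M') (morsePhi (morse_cx C M) M').
Proof.
move=> [hdeg _] [hM _] hf _ _ _.
rewrite /topo_loss.
set z := (fun a => morsePsi C M s a - morsePhi (morse_cx C M) M'
   (morsePsi (morse_cx C M) M' (morsePsi C M s)) a).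
rewrite -(@Phi_iso R C M n hdeg hf hM z).
rewrite (@cnorm_ext R n C _ (fun a => (s a - morsePhi C M (morsePsi C M s) a) + morsePhi C M z a)); last first.
  by move=> a _; rewrite Phi_lin addrA subrK.
rewrite /cnorm.
apply: (le_trans _ (@SS_mink R (cell C) (fun a => deg C a == n) (cdim C) (fun a i => (s a - morsePhi C M (morsePsi C M s) a) 0 i)
   (fun a i => morsePhi C M z a 0 i))).
apply: ler_wsqrtr; rewrite le_eqVlt; apply/orP; left; apply/eqP.
by apply: eq_bigr => a _; apply: eq_bigr => i _; rewrite mxE.
Qed.
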